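(* Let $\Phi:\mathcal{S}(\mathbb{C}^2)\to\mathcal{S}(\mathbb{C}^2)$ be a map. The following are equivalent: (1) $D_z(\Phi(\rho),\Phi(\omega))=D_z(\rho,\omega)$ for all $\rho,\omega\in\mathcal{S}(\mathbb{C}^2)$; (2) $|\mathbf{b}_{\Phi(\rho)}|=|\mathbf{b}_\rho|$ for all $\rho\in\mathcal{S}(\mathbb{C}^2)$, and either $(\mathbf{b}_{\Phi(\rho)})_3=(\mathbf{b}_\rho)_3$ for all $\rho\in\mathcal{S}(\mathbb{C}^2)$, or $(\mathbf{b}_{\Phi(\rho)})_3=-(\mathbf{b}_\rho)_3$ for all $\rho\in\mathcal{S}(\mathbb{C}^2)$.
   Context: Let $\mathcal{H}=\mathbb{C}^2$, $\mathcal{H}^*$ its dual space, and $\mathcal{S}(\mathcal{H})$ the set of density operators (positive semidefinite, trace one) on $\mathcal{H}$. For a linear operator $A$ on $\mathcal{H}$, its transpose $A^T$ is the operator on $\mathcal{H}^*$ defined by $(A^T\varphi)(x)=\varphi(Ax)$. For $\rho,\omega\in\mathcal{S}(\mathcal{H})$, the set of quantum couplings is $\mathcal{C}(\rho,\omega)=\{\Pi\in\mathcal{S}(\mathcal{H}\otimes\mathcal{H}^* ):\ \mathrm{tr}_{\mathcal{H}^*}[\Pi]=\omega,\ \mathrm{tr}_{\mathcal{H}}[\Pi]=\rho^T\}$. The Pauli matrices are $\sigma_1=\begin{bmatrix}0&1\\1&0\end{bmatrix}$, $\sigma_2=\begin{bmatrix}0&-i\\i&0\end{bmatrix}$, $\sigma_3=\sigma_z=\begin{bmatrix}1&0\\0&-1\end{bmatrix}$.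 The cost operator is $C_z=(\sigma_z\otimes I^T-I\otimes\sigma_z^T)^2$ and the quantum Wasserstein distance $D_z$ is defined by $D_z^2(\rho,\omega)=\inf\{\mathrm{tr}_{\mathcal{H}\otimes\mathcal{H}^*}[\Pi C_z]:\Pi\in\mathcal{C}(\rho,\omega)\}$. The Bloch vector of $\rho$ is $\mathbf{b}_\rho=(\mathrm{tr}[\sigma_j\rho])_{j=1}^3\in\mathbb{R}^3$, $|\cdot|$ the Euclidean norm, and $(\mathbf{b}_\rho)_3$ its third coordinate. *)

(* Defs.v *)
From HB Require Import structures.
From mathcomp Require Import all_boot all_order all_algebra.
From mathcomp Require Import classical_sets reals.
From mathcomp Require Import complex mxtens.

Set Implicit Arguments.
Unset Strict Implicit.
Unset Printing Implicit Defensive.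

Import Order.TTheory GRing.Theory Num.Theory.
Local Open Scope ring_scope.
Local Open Scope classical_set_scope.

Section QOT.
Variable R : realType.
Local Notation C := R[i].

Definition adjmx {m n} (A : 'M[C]_(m, n)) : 'M[C]_(n, m) :=
  (map_mx (fun z : C => z^*%C) A)^T.

(* density operators on C^n: self-adjoint, positive semidefinite, trace one.
   The order on C is the partial order of the numClosedField C
   (0 <= z  iff  z is a nonnegative real). *)
Definition density {n} (A : 'M[C]_n) : Prop :=
  [/\ adjmx A = A,
      (forall v : 'cV[C]_n, 0 <= (adjmx v *m A *m v) 0 0)
    & \tr A = 1].

Definition mx2 (a b c d : C) : 'M[C]_2 :=
  \matrix_(i < 2, j < 2)
    nth 0 (nth [::] [:: [:: a; b]; [:: c; d]] i) j.

Definition sigma1 : 'M[C]_2 := mx2 0 1 1 0.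
Definition sigma2 : 'M[C]_2 := mx2 0 (- Complex 0 1) (Complex 0 1) 0.
Definition sigma3 : 'M[C]_2 := mx2 1 0 0 (-1).

(* H (x) H^* is identified with C^2 (x) C^2 = C^4 using the standard basis of
   C^2 and its dual basis on H^*; in this identification the operator A^T on
   H^* has the matrix A^T (transpose). *)

Definition ptr_dual (P : 'M[C]_(2 * 2)) : 'M[C]_2 :=
  \matrix_(i, j) \sum_(k < 2) P (mxtens_index (i, k)) (mxtens_index (j, k)).

Definition ptr_H (P : 'M[C]_(2 * 2)) : 'M[C]_2 :=
  \matrix_(k, l) \sum_(i < 2) P (mxtens_index (i, k)) (mxtens_index (i, l)).

Definition coupling (rho omega : 'M[C]_2) : set 'M[C]_(2 * 2) :=
  [set P | density P /\ ptr_dual P = omega /\ ptr_H P = rho^T].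

Definition Cz : 'M[C]_(2 * 2) :=
  let S := sigma3 *t (1%:M : 'M[C]_2)^T - (1%:M : 'M[C]_2) *t sigma3^T in S *m S.

Definition Dz2 (rho omega : 'M[C]_2) : R :=
  inf [set complex.Re (\tr (P *m Cz)) | P in coupling rho omega].

Definition Dz (rho omega : 'M[C]_2) : R := Num.sqrt (Dz2 rho omega).

(* Bloch vector b_rho = (tr[sigma_j rho])_{j=1..3}, coordinates indexed by 'I_3 *)
Definition pauli (j : 'I_3) : 'M[C]_2 :=
  match val j with 0 => sigma1 | 1 => sigma2 | _ => sigma3 end.

Definition bloch (rho : 'M[C]_2) (j : 'I_3) : R :=
  complex.Re (\tr (pauli j *m rho)).

Definition bloch_norm (rho : 'M[C]_2) : R :=
  Num.sqrt (\sum_(j < 3) bloch rho j ^+ 2).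

Definition third : 'I_3 := @Ordinal 3 2 isT.

End QOT.

(* Main.v *)
Require Import Defs.
From HB Require Import structures.
From mathcomp Require Import all_boot all_order all_algebra.
From mathcomp Require Import classical_sets boolp reals.
From mathcomp Require Import complex mxtens.
From mathcomp Require Import ring lra.
Import Order.TTheory GRing.Theory Num.Theory.
Local Open Scope ring_scope.
Set Implicit Arguments.
Unset Strict Implicit.
Unset Printing Implicit Defensive.

Definition i0 : 'I_2 := @Ordinal 2 0 isT.
Definition i1 : 'I_2 := @Ordinal 2 1 isT.
Notation ix i k := (@mxtens_index 2 2 (i, k)).
Notation ia := (ix i0 i0).
Notation ib := (ix i0 i1).
Notation ic := (ix i1 i0).
Notation idd := (ix i1 i1).
Section S.
Variable R : realType.
Local Notation C := R[i].
Local Notation Re := complex.Re.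
Local Notation Im := complex.Im.
Local Notation cj z := (conjc z).

Definition qf {n} (A : 'M[C]_n) (v : 'cV[C]_n) := (adjmx v *m A *m v) 0 0.

Lemma qfE n (A : 'M[C]_n) v :
  qf A v = \sum_i \sum_j cj (v i 0) * A i j * v j 0.
Proof.
rewrite /qf mxE; under eq_bigr do rewrite mxE mulr_suml.
rewrite exchange_big; apply: eq_bigr => i _; apply: eq_bigr => j _.
by rewrite !mxE.
Qed.

Lemma hermE n (A : 'M[C]_n) : adjmx A = A -> forall i j, A j i = cj (A i j).
Proof. by move=> h i j; rewrite -{1}h !mxE. Qed.

Lemma sum_delta n (i : 'I_n) (F : 'I_n -> C) :
  \sum_k (k == i)%:R * F k = F i.
Proof.
rewrite (bigD1 i) //= eqxx mul1r big1 ?addr0 // => k /negbTE ->.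
by rewrite mul0r.
Qed.

Lemma sum_delta' n (i : 'I_n) (F : 'I_n -> C) :
  \sum_k F k * (k == i)%:R = F i.
Proof. by under eq_bigr do rewrite mulrC; apply: sum_delta. Qed.

Definition vec2 n (i j : 'I_n) (a b : C) : 'cV[C]_n :=
  \col_k (a * (k == i)%:R + b * (k == j)%:R).

Lemma qf_vec2 n (A : 'M[C]_n) i j a b :
  qf A (vec2 i j a b) =
  cj a * a * A i i + cj a * b * A i j + cj b * a * A j i + cj b * b * A j j.
Proof.
rewrite qfE.
have inner k X : \sum_l X * A k l * vec2 i j a b l 0 =
   X * A k i * a + X * A k j * b.
  under eq_bigr => l _ do rewrite mxE mulrDr !mulrA.
  by rewrite big_split /= !sum_delta'.
under eq_bigr => k _ do rewrite inner mxE rmorphD /= !rmorphM /= !conjc_nat.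
under eq_bigr => k _ do rewrite !mulrDl -!(mulrC (_ %:R)) -!mulrA.
rewrite !big_split /= !sum_delta; ring.
Qed.


Definition psd {n} (A : 'M[C]_n) := forall v, 0 <= qf A v.

Lemma ge0C (z : C) : 0 <= z -> Im z = 0 /\ 0 <= Re z.
Proof. by case: z => x y; rewrite lecE /= => /andP[/eqP -> ->]. Qed.

Lemma psd_diag n (A : 'M[C]_n) : psd A -> forall i, 0 <= A i i.
Proof.
move=> h i; have := h (vec2 i i 1 0).
by rewrite qf_vec2 rmorph0 rmorph1 !mul0r !mulr0 !addr0 !mul1r mul0r addr0.
Qed.

Lemma real_minor (N a d : R) :
  (forall l, 0 <= l^+2 * N * a - 2 * l * N + d) -> 0 <= a -> 0 <= d -> 0 <= N ->
  N <= a * d.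
Proof.
move=> h a0 d0 N0.
have [ap|] := ltrP 0 a.
  have hb := h a^-1; move: hb; set b := a^-1 => hb.
  have ab : a * b = 1 by rewrite /b mulfV // gt_eqF.
  have e1 : b^+2 * N * a = b * N.
    by rewrite expr2 -mulrA (mulrC N) mulrA -(mulrA b) (mulrC b a) ab mulr1.
  rewrite e1 in hb.
  have : 0 <= a * (d - b * N) by rewrite mulr_ge0 //; lra.
  by rewrite mulrBr mulrA ab mul1r subr_ge0.
rewrite le_eqVlt ltNge a0 orbF => /eqP a0'.
have [Np|] := ltrP 0 N.
  have hb := h ((d + 1) / N); move: hb; set b := (d+1)/N => hb.
  have Nb : N * b = d + 1 by rewrite /b mulrC divfK // gt_eqF.
  rewrite a0' in hb; nra.
rewrite a0' mul0r; lra.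
Qed.

Lemma psd_minor n (A : 'M[C]_n) i j : psd A -> adjmx A = A -> i != j ->
  Re (A i j) ^+ 2 + Im (A i j) ^+ 2 <= Re (A i i) * Re (A j j).
Proof.
move=> hA hH ij.
have [ia ra] := ge0C (psd_diag hA i).
have [ja rd] := ge0C (psd_diag hA j).
have hji := hermE hH i j.
apply: real_minor => //; last by rewrite addr_ge0 // sqr_ge0.
move=> l; have := hA (vec2 i j ((- l)%:C%C * A i j) 1).
rewrite qf_vec2 hji.
move: (A i i) (A j j) (A i j) ia ja ra rd => [a1 a2] [d1 d2] [m1 m2] /= -> -> ra rd.
rewrite lecE /= => /andP[_] H; apply: (le_trans H); rewrite le_eqVlt; apply/orP; left; apply/eqP; ring.
Qed.


Lemma sum2 (F : 'I_2 -> C) : \sum_(i < 2) F i = F i0 + F i1.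
Proof. by rewrite big_ord_recl big_ord1; congr (F _ + F _); apply: val_inj. Qed.

Lemma ord2P (P : 'I_2 -> Prop) : P i0 -> P i1 -> forall i, P i.
Proof. by move=> h0 h1 [[|[|//]] Hi]; [move: h0|move: h1]; congr P; apply: val_inj. Qed.

Lemma sum4 (F : 'I_(2*2) -> C) :
  \sum_(I < 2*2) F I = F (ix i0 i0) + F (ix i0 i1) + F (ix i1 i0) + F (ix i1 i1).
Proof.
rewrite (reindex (@mxtens_index 2 2)) /=; last first.
  by exists (@mxtens_unindex 2 2) => i _; rewrite (mxtens_indexK, mxtens_unindexK).
transitivity (\sum_(p : 'I_2 * 'I_2) F (ix p.1 p.2)).
  by apply: eq_bigr => -[i k].
by rewrite -(pair_bigA _ (fun i k => F (ix i k))) /= !sum2 addrA.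
Qed.

Lemma mx2E (a b c d : C) :
  [/\ mx2 a b c d i0 i0 = a, mx2 a b c d i0 i1 = b, mx2 a b c d i1 i0 = c
    & mx2 a b c d i1 i1 = d].
Proof. by rewrite /mx2 !mxE. Qed.

Lemma CzE i k j l : @Cz R (ix i k) (ix j l) =
  if (i == j) && (k == l) && (i != k) then 4 else 0.
Proof.
rewrite /Cz mxE sum4 !mxE !mxtens_indexK /=.
move: i k j l; apply: ord2P; apply: ord2P; apply: ord2P; apply: ord2P;
  rewrite /= ?mxE /=; ring.
Qed.


Lemma trCz (P : 'M[C]_(2*2)) : \tr (P *m @Cz R) = 4 * (P ib ib + P ic ic).
Proof.
rewrite /mxtrace sum4 !mxE !sum4 !CzE /=; ring.
Qed.

Lemma ptrdE (P : 'M[C]_(2*2)) i j :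
  ptr_dual P i j = P (ix i i0) (ix j i0) + P (ix i i1) (ix j i1).
Proof. by rewrite mxE sum2. Qed.

Lemma ptrHE (P : 'M[C]_(2*2)) k l :
  ptr_H P k l = P (ix i0 k) (ix i0 l) + P (ix i1 k) (ix i1 l).
Proof. by rewrite mxE sum2. Qed.

Lemma tr4 (P : 'M[C]_(2*2)) : \tr P = P ia ia + P ib ib + P ic ic + P idd idd.
Proof. by rewrite /mxtrace sum4. Qed.

Lemma tr2 (P : 'M[C]_2) : \tr P = P i0 i0 + P i1 i1.
Proof. by rewrite /mxtrace sum2. Qed.
End S.


Local Open Scope classical_set_scope.

Section S2.
Variable R : realType.
Local Notation C := R[i].
Local Notation Re := complex.Re.
Local Notation Im := complex.Im.
Local Notation cj z := (conjc z).

Definition mkr (p q : R) (m : C) : 'M[C]_2 := mx2 (Complex p 0) m (cj m) (Complex q 0).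

Lemma mkrE p q m :
  [/\ mkr p q m i0 i0 = Complex p 0, mkr p q m i0 i1 = m,
     mkr p q m i1 i0 = cj m & mkr p q m i1 i1 = Complex q 0].
Proof. by rewrite /mkr !mxE. Qed.

Lemma trE (M : 'M[C]_2) i j : M^T i j = M j i. Proof. by rewrite mxE. Qed.

Lemma one_c (p q : R) : p + q = 1 -> (Complex p 0 + Complex q 0 : C) = 1.
Proof. by move=> h; apply/eqP; rewrite eq_complex /= h addr0 !eqxx. Qed.

Lemma mx2_eta (M : 'M[C]_2) : M = mx2 (M i0 i0) (M i0 i1) (M i1 i0) (M i1 i1).
Proof.
by apply/matrixP; apply: ord2P; apply: ord2P; case: (mx2E (M i0 i0) (M i0 i1) (M i1 i0) (M i1 i1)).
Qed.

Lemma dens_form (r : 'M[C]_2) : density r -> exists p q m,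
  [/\ r = mkr p q m, 0 <= p, 0 <= q, p + q = 1 & Re m ^+ 2 + Im m ^+ 2 <= p * q].
Proof.
case=> hH hP htr.
have [ia ra] := ge0C (psd_diag hP i0).
have [ja rd] := ge0C (psd_diag hP i1).
have mn := psd_minor hP hH (isT : i0 != i1).
exists (Re (r i0 i0)), (Re (r i1 i1)), (r i0 i1); split => //.
- rewrite {1}[r]mx2_eta /mkr (hermE hH i0 i1); congr mx2.
    by move: (r i0 i0) ia => [] /= ? ? ->.
  by move: (r i1 i1) ja => [] /= ? ? ->.
- by move: htr; rewrite tr2; move: (r i0 i0) (r i1 i1) => [? ?] [? ?] [].
Qed.

Lemma ReD (a b : C) : Re (a + b) = Re a + Re b. Proof. by case: a; case: b. Qed.
Lemma ImD (a b : C) : Im (a + b) = Im a + Im b. Proof. by case: a; case: b. Qed.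

Definition cost (P : 'M[C]_(2*2)) := Re (\tr (P *m @Cz R)).

Lemma costE P : cost P = 4 * (Re (P ib ib) + Re (P ic ic)).
Proof. by rewrite /cost trCz; move: (P ib ib) (P ic ic) => [? ?] [? ?] /=; ring. Qed.

Lemma coup_facts p q m p' q' n P : coupling (mkr p q m) (mkr p' q' n) P ->
  let a := Re (P ia ia) in let x := Re (P ib ib) in
  let y := Re (P ic ic) in let d := Re (P idd idd) in
  [/\ [/\ 0 <= a, 0 <= x, 0 <= y & 0 <= d],
      [/\ a + x = p', y + d = q', a + y = p & x + d = q],
      [/\ Re (P ia ib) + Re (P ic idd) = Re m, Im (P ia ib) + Im (P ic idd) = - Im m,
          Re (P ia ic) + Re (P ib idd) = Re n & Im (P ia ic) + Im (P ib idd) = Im n],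
      Re (P ia ib) ^+ 2 + Im (P ia ib) ^+ 2 <= a * x &
      Re (P ic idd) ^+ 2 + Im (P ic idd) ^+ 2 <= y * d].
Proof.
case=> -[hH hP htr] [hd hh] a x y d.
have [_ a0] := ge0C (psd_diag hP ia).
have [_ x0] := ge0C (psd_diag hP ib).
have [_ y0] := ge0C (psd_diag hP ic).
have [_ d0] := ge0C (psd_diag hP idd).
have m1 := psd_minor hP hH (isT : ia != ib).
have m2 := psd_minor hP hH (isT : ic != idd).
have E M i j : ptr_dual P = M -> ptr_dual P i j = M i j by move=> ->.
have F M i j : ptr_H P = M -> ptr_H P i j = M i j by move=> ->.
have e00 := E _ i0 i0 hd; have e11 := E _ i1 i1 hd; have e01 := E _ i0 i1 hd.
have f00 := F _ i0 i0 hh; have f11 := F _ i1 i1 hh; have f01 := F _ i0 i1 hh.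
rewrite !ptrdE /mkr !mxE /= in e00 e11 e01.
rewrite !ptrHE /mkr !mxE /= in f00 f11 f01.
split => //.
- split.
  + by move/(congr1 (@complex.Re R)): e00; rewrite ReD.
  + by move/(congr1 (@complex.Re R)): e11; rewrite ReD.
  + by move/(congr1 (@complex.Re R)): f00; rewrite ReD.
  + by move/(congr1 (@complex.Re R)): f11; rewrite ReD.
- split.
  + by move/(congr1 (@complex.Re R)): f01; rewrite ReD; case: (m).
  + by move/(congr1 (@complex.Im R)): f01; rewrite ImD; case: (m).
  + by move/(congr1 (@complex.Re R)): e01; rewrite ReD.
  + by move/(congr1 (@complex.Im R)): e01; rewrite ImD.
Qed.

Lemma cost_ge0 P : density P -> 0 <= cost P.
Proof.
case=> _ hP _; rewrite costE.
have [_ x0] := ge0C (psd_diag hP ib).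
have [_ y0] := ge0C (psd_diag hP ic).
by rewrite mulr_ge0 // addr_ge0.
Qed.

Lemma Dz2_le (r w : 'M[C]_2) P : coupling r w P -> Dz2 r w <= cost P.
Proof.
move=> hc; rewrite /Dz2; apply: ge_inf; last by exists P.
exists 0 => y [Q [hQ _] <-]; exact: cost_ge0.
Qed.

Lemma Dz2_ge (r w : 'M[C]_2) L P0 : coupling r w P0 ->
  (forall P, coupling r w P -> L <= cost P) -> L <= Dz2 r w.
Proof.
move=> h0 h; rewrite /Dz2; apply: lb_le_inf; first by exists (cost P0), P0.
by move=> y [Q hQ <-]; apply: h.
Qed.

Lemma Dz2_ge0 (r w : 'M[C]_2) : 0 <= Dz2 r w.
Proof.
have [[P hP]|nP] := pselect (exists P, coupling r w P).
  by apply: (Dz2_ge hP) => Q [hQ _]; apply: cost_ge0.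
rewrite /Dz2 (_ : [set _ | P in _] = set0) ?inf0 //.
by apply/seteqP; split => // y [Q hQ _]; apply: nP; exists Q.
Qed.

Lemma adjmx_tens (A B : 'M[C]_2) : adjmx (A *t B) = adjmx A *t adjmx B.
Proof.
apply/matrixP => I J; case: (mxtens_indexP I) => i k; case: (mxtens_indexP J) => j l.
by rewrite tensmxE !mxE !mxtens_indexK rmorphM.
Qed.

Lemma adjmx_tr (A : 'M[C]_2) : adjmx (A^T) = (adjmx A)^T.
Proof. by apply/matrixP => i j; rewrite !mxE. Qed.

Lemma adjmx_mkr p q m : adjmx (mkr p q m) = mkr p q m.
Proof.
apply/matrixP; apply: ord2P; apply: ord2P; rewrite /mkr !mxE /= ?conjcK ?oppr0 //.
Qed.

Lemma psd_tr (B : 'M[C]_2) : psd B -> psd B^T.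
Proof.
move=> h v; have := h (map_mx (fun z => cj z) v).
rewrite !qfE !sum2 !mxE !conjcK => H.
by apply: (le_trans H); rewrite le_eqVlt; apply/orP; left; apply/eqP; ring.
Qed.

Lemma psd_tens_diag (A B : 'M[C]_2) : A i0 i1 = 0 -> A i1 i0 = 0 ->
  0 <= A i0 i0 -> 0 <= A i1 i1 -> psd B -> psd (A *t B).
Proof.
move=> h01 h10 h00 h11 hB v.
pose w i : 'cV[C]_2 := \col_k v (ix i k) 0.
have -> : qf (A *t B) v = A i0 i0 * qf B (w i0) + A i1 i1 * qf B (w i1).
  rewrite !qfE !sum4 !sum2 !tensmxE !mxE h01 h10; ring.
by rewrite addr_ge0 // mulr_ge0.
Qed.

Lemma prod_coup p q m p' q' :
  0 <= p' -> 0 <= q' -> p' + q' = 1 -> density (mkr p q m) ->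
  coupling (mkr p q m) (mkr p' q' 0) (mkr p' q' 0 *t (mkr p q m)^T) /\
  cost (mkr p' q' 0 *t (mkr p q m)^T) = 4 * (p' * q + q' * p).
Proof.
move=> p0 q0 pq [hH hP htr].
have htr' : p + q = 1.
  by move: htr; rewrite tr2 /mkr !mxE /= => -[].
split; last first.
  by rewrite costE !tensmxE /mkr !mxE /=; ring.
split; [split|split].
- by rewrite adjmx_tens adjmx_tr hH adjmx_mkr.
- apply: psd_tens_diag; last exact: psd_tr.
  + by rewrite /mkr !mxE.
  + by rewrite /mkr !mxE /= oppr0.
  + by rewrite /mkr !mxE lecE /= eqxx.
  + by rewrite /mkr !mxE lecE /= eqxx.
- rewrite tr4 !tensmxE /mkr !mxE /=; apply/eqP; rewrite eq_complex /=; apply/andP; split; apply/eqP; 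
  [rewrite -(mulr1 1) -{1}pq -{1}htr'|]; ring.
- apply/matrixP => i j; rewrite ptrdE !tensmxE !trE -mulrDr.
  by case: (mkrE p q m) => -> _ _ ->; rewrite one_c // mulr1.
- apply/matrixP => i j; rewrite ptrHE !tensmxE -mulrDl.
  by case: (mkrE p' q' 0) => -> _ _ ->; rewrite one_c // mul1r.
Qed.

Lemma eqle (x y : R) : x = y -> x <= y. Proof. by move=> ->. Qed.

Lemma sq_le (u w : R) : 0 <= w -> u ^+ 2 <= w ^+ 2 -> u <= w.
Proof.
move=> w0 h; have [//|uw] := lerP u w.
have : 0 < (u - w) * (u + w) by apply: mulr_gt0; lra.
have -> : (u - w) * (u + w) = u ^+ 2 - w ^+ 2 by ring.
lra.
Qed.

Lemma real_sd (u1 v1 u2 v2 a x d p q s : R) :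
  0 <= a -> 0 <= x -> 0 <= d ->
  u1 ^+ 2 + v1 ^+ 2 <= a * x -> u2 ^+ 2 + v2 ^+ 2 <= x * d ->
  a + x = p -> x + d = q -> p + q = 1 -> 0 <= s ->
  s ^+ 2 = 4 * (p * q) - 4 * ((u1 + u2) ^+ 2 + (v1 + v2) ^+ 2) ->
  (u1 + u2) ^+ 2 + (v1 + v2) ^+ 2 <= x * (1 + s).
Proof.
move=> a0 x0 d0 h1 h2 ep eq pq s0 es.
set T := (u1 + u2) ^+ 2 + (v1 + v2) ^+ 2 in es *.
set G := Num.sqrt (a * d).
have G0 : 0 <= G by rewrite sqrtr_ge0.
have GG : G ^+ 2 = a * d by rewrite sqr_sqrtr // mulr_ge0.
have N1 : 0 <= u1 ^+ 2 + v1 ^+ 2 by nra.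
have N2 : 0 <= u2 ^+ 2 + v2 ^+ 2 by nra.
have cs : (u1 * u2 + v1 * v2) ^+ 2 <= (x * G) ^+ 2.
  have : (u1 * u2 + v1 * v2) ^+ 2 <= (u1 ^+ 2 + v1 ^+ 2) * (u2 ^+ 2 + v2 ^+ 2).
    have h0 := sqr_ge0 (u1 * v2 - v1 * u2).
    have e : (u1^+2+v1^+2)*(u2^+2+v2^+2) - (u1*u2+v1*v2)^+2 = (u1 * v2 - v1 * u2)^+2 by ring.
    lra.
  move/le_trans; apply.
  rewrite exprMn GG.
  have : (u1 ^+ 2 + v1 ^+ 2) * (u2 ^+ 2 + v2 ^+ 2) <= (a * x) * (x * d).
    by apply: ler_pM.
  by move/le_trans; apply; apply/eqle; ring.
have K : u1 * u2 + v1 * v2 <= x * G by apply: sq_le => //; rewrite mulr_ge0.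
have TT : T <= x * (a + d + 2 * G) by rewrite /T; nra.
have ad : a + d = 1 - 2 * x by lra.
rewrite ad in TT.
have xs : 0 <= x * s by rewrite mulr_ge0.
have [Lneg|Lpos] := ltrP (T - x + 2 * x ^+ 2) 0.
  have : 0 <= x ^+ 2 by rewrite sqr_ge0.
  nra.
have L2 : (T - x + 2 * x ^+ 2) ^+ 2 <= (2 * x * G) ^+ 2.
  by rewrite (@ler_pXn2r _ 2) //= ?nnegrE ?mulr_ge0 //; lra.
have : (T - x) ^+ 2 <= (x * s) ^+ 2.
  rewrite exprMn es.
  have e2 : (2 * x * G) ^+ 2 = 4 * x ^+ 2 * (a * d) by rewrite -GG; ring.
  rewrite e2 in L2.
  have ea : a = p - x by lra.
  have ed : d = q - x by lra.
  rewrite ea ed in L2.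
  have eq' : q = 1 - p by lra.
  rewrite eq' in L2 *.
  have f1 : (T - x + 2 * x ^+ 2) ^+ 2 = (T - x) ^+ 2 + 4 * x ^+ 2 * (T - x + x ^+ 2) by ring.
  have f2 : 4 * x ^+ 2 * ((p - x) * (1 - p - x)) =
     x ^+ 2 * (4 * (p * (1 - p)) - 4 * T) + 4 * x ^+ 2 * (T - x + x ^+ 2) by ring.
  lra.
move/(sq_le xs) => h; lra.
Qed.

Lemma adjmx_mul m n k (A : 'M[C]_(m, n)) (B : 'M[C]_(n, k)) :
  adjmx (A *m B) = adjmx B *m adjmx A.
Proof. by rewrite /adjmx map_mxM trmx_mul. Qed.

Lemma adjmxK m n (A : 'M[C]_(m, n)) : adjmx (adjmx A) = A.
Proof. by apply/matrixP => i j; rewrite !mxE conjcK. Qed.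

Lemma psd_rank1 n (v : 'cV[C]_n) : psd (v *m adjmx v).
Proof.
move=> w; have e : adjmx v *m w = adjmx (adjmx w *m v) by rewrite adjmx_mul adjmxK.
rewrite /qf mulmxA -mulmxA e mxE big_ord1.
have -> : forall M : 'M[C]_1, adjmx M ord0 0 = cj (M 0 ord0) by move=> M; rewrite !mxE.
exact: mulcJ_ge0.
Qed.

Lemma rank1E n (v : 'cV[C]_n) i j : (v *m adjmx v) i j = v i 0 * cj (v j 0).
Proof. by rewrite mxE big_ord1 !mxE. Qed.

Lemma dens_rank1 n (v : 'cV[C]_n) : \tr (v *m adjmx v) = 1 -> density (v *m adjmx v).
Proof. by move=> h; split => //; [rewrite adjmx_mul adjmxK | exact: psd_rank1]. Qed.

Definition Tm (m : C) := Re m ^+ 2 + Im m ^+ 2.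
Definition sdv (p q : R) (m : C) := Num.sqrt (4 * (p * q) - 4 * Tm m).
Definition SD (p q : R) (m : C) := 8 * (Tm m / (1 + sdv p q m)).

Lemma sd_lb p q m P : p + q = 1 -> Tm m <= p * q ->
  coupling (mkr p q m) (mkr p q m) P -> SD p q m <= cost P.
Proof.
move=> pq Tpq hc; have [[a0 x0 y0 d0] [e1 e2 e3 e4] [r1 r2 _ _] m1 m2] := coup_facts hc.
set s := sdv p q m.
have s0 : 0 <= s by rewrite sqrtr_ge0.
have ss : s ^+ 2 = 4 * (p * q) - 4 * Tm m by rewrite sqr_sqrtr //; lra.
have xy : Re (P ib ib) = Re (P ic ic) by lra.
rewrite -xy in m2.
have := real_sd a0 x0 d0 m1 m2 e1 e4 pq s0.
rewrite r1 r2 sqrrN -/(Tm m) => /(_ ss) h.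
rewrite costE /SD -xy -/s.
have : Tm m / (1 + s) <= Re (P ib ib).
  by rewrite ler_pdivrMr //; lra.
lra.
Qed.
End S2.


Section S3.
Variable R : realType.
Local Notation C := R[i].
Local Notation Re := complex.Re.
Local Notation Im := complex.Im.
Local Notation cj z := (conjc z).

Lemma sd_coup p q (m : C) : 0 <= p -> 0 <= q -> p + q = 1 -> Tm m <= p * q ->
  exists P, coupling (mkr p q m) (mkr p q m) P /\ cost P = SD p q m.
Proof.
move=> p0 q0 pq Tpq.
rewrite /SD; set T := Tm m; set s := sdv p q m.
have s0 : 0 <= s by rewrite sqrtr_ge0.
have hs : s ^+ 2 = 4 * (p * q) - 4 * T by rewrite sqr_sqrtr //; lra.
set x := T / (1 + s).
have hx : x * (1 + s) = T by rewrite /x divfK // gt_eqF //; lra.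
have T0 : 0 <= T by rewrite /T /Tm addr_ge0 // sqr_ge0.
have x0 : 0 <= x by rewrite /x divr_ge0 //; lra.
have xT : x <= T by nra.
have pq4 : 4 * (p * q) <= 1.
  have := sqr_ge0 (p - q); have e : (p - q) ^+ 2 = (p + q) ^+ 2 - 4 * (p * q) by ring.
  rewrite e pq expr1n; lra.
set a := p - x; set d := q - x.
have ad1 : a + d = 1 - 2 * x by rewrite /a /d; lra.
have ad2 : a * d = (x + s / 2) ^+ 2.
  have eq' : q = 1 - p by lra.
  rewrite /a /d eq'; rewrite eq' in hs.
  have e : (x + s / 2) ^+ 2 = x ^+ 2 + x * s + s ^+ 2 / 4 by field.
  by rewrite e hs -hx; field.
have a0 : 0 <= a.
  have := sqr_ge0 (x + s / 2); rewrite -ad2 => h; nra.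
have d0 : 0 <= d.
  have := sqr_ge0 (x + s / 2); rewrite -ad2 => h; nra.
set A := Num.sqrt a; set D := Num.sqrt d.
have A0 : 0 <= A by rewrite sqrtr_ge0.
have D0 : 0 <= D by rewrite sqrtr_ge0.
have AA : A ^+ 2 = a by rewrite sqr_sqrtr.
have DD : D ^+ 2 = d by rewrite sqr_sqrtr.
have AD : A * D = x + s / 2.
  by rewrite /A /D -sqrtrM // ad2 sqrtr_sqr ger0_norm //; lra.
set K := A + D.
have KK : K ^+ 2 = 1 + s by rewrite /K; nra.
have K0 : 0 < K by rewrite /K; nra.
set k := K^-1.
have Kk : K * k = 1 by rewrite /k mulfV // gt_eqF.
have Tk : T * k ^+ 2 = x by rewrite -hx -KK -mulrA -exprMn Kk expr1n mulr1.
have em : m = Complex (Re m) (Im m) by case: (m).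
rewrite em; set m1 := Re m; set m2 := Im m.
pose f (I : 'I_(2*2)) : C := if I == ia then Complex A 0 else if I == ib then
   Complex (m1 * k) (m2 * k) else if I == ic then Complex (m1 * k) (- (m2 * k))
   else Complex D 0.
pose v : 'cV[C]_(2*2) := \col_I f I.
have va : v ia 0 = Complex A 0 by rewrite mxE.
have vb : v ib 0 = Complex (m1 * k) (m2 * k) by rewrite mxE.
have vc : v ic 0 = Complex (m1 * k) (- (m2 * k)) by rewrite mxE.
have vd : v idd 0 = Complex D 0 by rewrite mxE.
have hm1 : m1 * k * A + m1 * k * D = m1 by rewrite -mulrDr -/K -mulrA (mulrC k) Kk mulr1.
have hm2 : m2 * k * A + m2 * k * D = m2 by rewrite -mulrDr -/K -mulrA (mulrC k) Kk mulr1.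
have hbb : m1 * k * (m1 * k) + m2 * k * (m2 * k) = x by rewrite -Tk /T /Tm; ring.
have AA' : A * A = p - x by rewrite -expr2 AA.
have DD' : D * D = q - x by rewrite -expr2 DD.
exists (v *m adjmx v); split; last first.
  rewrite costE !rank1E vb vc /=; lra.
split; [apply: dens_rank1|split].
- rewrite tr4 !rank1E va vb vc vd /=.
  apply/eqP; rewrite eq_complex /=; apply/andP; split; apply/eqP; lra.
- apply/matrixP; apply: ord2P; apply: ord2P; rewrite ptrdE !rank1E ?va ?vb ?vc ?vd /mkr !mxE /=;
  apply/eqP; rewrite eq_complex /=; apply/andP; split; apply/eqP; lra.
- apply/matrixP; apply: ord2P; apply: ord2P; rewrite ptrHE !rank1E ?va ?vb ?vc ?vd /mkr !mxE /=;
  apply/eqP; rewrite eq_complex /=; apply/andP; split; apply/eqP; lra.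
Qed.
End S3.

Section S4.
Variable R : realType.
Local Notation C := R[i].
Local Notation Re := complex.Re.
Local Notation Im := complex.Im.
Local Notation cj z := (conjc z).

Lemma Dz2_self p q (m : C) : 0 <= p -> 0 <= q -> p + q = 1 -> Tm m <= p * q ->
  Dz2 (mkr p q m) (mkr p q m) = SD p q m.
Proof.
move=> p0 q0 pq Tpq; have [P [hP cP]] := sd_coup p0 q0 pq Tpq.
apply/le_anti/andP; split; first by rewrite -cP; apply: Dz2_le.
by apply: (Dz2_ge hP) => Q hQ; apply: sd_lb.
Qed.

Lemma lb_coup p q (m : C) p' q' n P : coupling (mkr p q m) (mkr p' q' n) P ->
  4 * `|p - p'| <= cost P.
Proof.
move=> hc; have [[a0 x0 y0 d0] [e1 e2 e3 e4] _ _ _] := coup_facts hc.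
rewrite costE; have -> : p - p' = Re (P ic ic) - Re (P ib ib) by lra.
have : `|Re (P ic ic) - Re (P ib ib)| <= Re (P ib ib) + Re (P ic ic).
  by rewrite ler_norml; apply/andP; split; lra.
lra.
Qed.

Lemma Dz2_diag p q (m : C) p' q' : density (mkr p q m) ->
  0 <= p' -> 0 <= q' -> p' + q' = 1 ->
  4 * `|p - p'| <= Dz2 (mkr p q m) (mkr p' q' 0) <= 4 * (p' * q + q' * p).
Proof.
move=> hd p0 q0 pq; have [hc cc] := prod_coup p0 q0 pq hd.
apply/andP; split; last by rewrite -cc; apply: Dz2_le.
by apply: (Dz2_ge hc) => Q hQ; apply: lb_coup hQ.
Qed.

Lemma dens_mkr0 (p q : R) : 0 <= p -> 0 <= q -> p + q = 1 -> density (mkr p q 0).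
Proof.
move=> p0 q0 pq; split.
- exact: adjmx_mkr.
- move=> v; rewrite -/(qf _ _) qfE !sum2.
  case: (mkrE p q (0 : C)) => -> -> -> ->; rewrite rmorph0.
  have -> : forall a b : C, cj a * Complex p 0 * a + cj a * 0 * b + (cj b * 0 * a + cj b * Complex q 0 * b)
     = (a * cj a) * Complex p 0 + (b * cj b) * Complex q 0 by move=> a b; ring.
  by rewrite addr_ge0 // mulr_ge0 ?mulcJ_ge0 // lecE /= eqxx.
- by rewrite tr2; case: (mkrE p q (0 : C)) => -> _ _ ->; rewrite one_c.
Qed.

Lemma SD_eq0 p q (m : C) : Tm m <= p * q -> SD p q m = 0 -> Tm m = 0.
Proof.
move=> Tpq; rewrite /SD; set s := sdv p q m.
have s0 : 0 <= s by rewrite sqrtr_ge0.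
move/eqP; rewrite mulf_eq0 => /orP[/eqP|]; first lra.
rewrite mulf_eq0 invr_eq0 => /orP[/eqP //|/eqP]; lra.
Qed.

Lemma SD_inj p q (m : C) p' q' (m' : C) : p' * q' = p * q ->
  0 <= Tm m -> Tm m <= p * q -> 0 <= Tm m' -> Tm m' <= p' * q' ->
  SD p q m = SD p' q' m' -> Tm m = Tm m'.
Proof.
rewrite /SD /sdv => e; rewrite e => T0 T1 T0' T1'.
set T := Tm m; set T' := Tm m'.
have key : forall t t', 0 <= t -> t < t' -> t' <= p * q ->
    t / (1 + Num.sqrt (4 * (p * q) - 4 * t)) < t' / (1 + Num.sqrt (4 * (p * q) - 4 * t')).
  move=> t t' t0 tt t'1.
  set s := Num.sqrt (4 * (p * q) - 4 * t); set s' := Num.sqrt (4 * (p * q) - 4 * t').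
  have s0 : 0 <= s' by rewrite sqrtr_ge0.
  have ss : s' < s by rewrite ltr_sqrt; lra.
  rewrite ltr_pdivrMr ?ltr_wpDr //; last by lra.
  rewrite mulrAC ltr_pdivlMr; last by lra.
  nra.
have n8 : (8 : R) != 0 by rewrite pnatr_eq0.
move=> /(mulfI n8) h; apply/eqP; rewrite eq_le; apply/andP; split; rewrite leNgt; apply/negP => lt.
- by have := key _ _ T0' lt T1; rewrite h ltxx.
- by have := key _ _ T0 lt T1'; rewrite h ltxx.
Qed.
End S4.


Section S5.
Variable R : realType.
Local Notation C := R[i].
Local Notation Re := complex.Re.
Local Notation Im := complex.Im.
Local Notation cj z := (conjc z).

Lemma unimod (m m' : C) : Tm m' = Tm m -> exists u : C, u * cj u = 1 /\ m' = u * m.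
Proof.
have mm : forall z : C, z * cj z = Complex (Tm z) 0.
  by case=> a b; rewrite /Tm /=; apply/eqP; rewrite eq_complex /=; apply/andP; split;
    apply/eqP; ring.
have [->|m0] := eqVneq m 0.
  move=> h; exists 1; rewrite rmorph1 mulr1 mulr0; split => //.
  move: h; rewrite /Tm /=; case: m' => a b /= h.
  have a0 : a = 0 by nra.
  have b0 : b = 0 by nra.
  by rewrite a0 b0.
move=> h; exists (m' / m); split; last by rewrite divfK.
by rewrite rmorphM /= fmorphV /= mulrACA -invfM (mm m') h -(mm m) divff // mulf_neq0 ?conjc_eq0.
Qed.

Lemma eqleC (x y : C) : x = y -> x <= y. Proof. by move=> ->. Qed.

Definition pmx (w : 'I_(2*2) -> C) (P : 'M[C]_(2*2)) : 'M[C]_(2*2) :=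
  \matrix_(I, J) (w I * P I J * cj (w J)).

Lemma psd_pmx w P : psd P -> psd (pmx w P).
Proof.
move=> h v; have := h (\col_I (cj (w I) * v I 0)).
rewrite !qfE => H; apply: (le_trans H); apply/eqleC.
apply: eq_bigr => I _; apply: eq_bigr => J _; rewrite !mxE rmorphM /= conjcK; ring.
Qed.

Lemma herm_pmx w P : adjmx P = P -> adjmx (pmx w P) = pmx w P.
Proof.
move=> h; apply/matrixP => I J; rewrite !mxE (hermE h I J) !rmorphM /= !conjcK; ring.
Qed.
End S5.

Section S6.
Variable R : realType.
Local Notation C := R[i].
Local Notation Re := complex.Re.
Local Notation Im := complex.Im.
Local Notation cj z := (conjc z).

Lemma mkr00 p q (m : C) : mkr p q m i0 i0 = Complex p 0. Proof. by case: (mkrE p q m). Qed.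
Lemma mkr01 p q (m : C) : mkr p q m i0 i1 = m. Proof. by case: (mkrE p q m). Qed.
Lemma mkr10 p q (m : C) : mkr p q m i1 i0 = cj m. Proof. by case: (mkrE p q m). Qed.
Lemma mkr11 p q (m : C) : mkr p q m i1 i1 = Complex q 0. Proof. by case: (mkrE p q m). Qed.
Definition mkrS := (mkr00, mkr01, mkr10, mkr11).

Definition wfun (al be : 'I_2 -> C) (I : 'I_(2*2)) : C :=
  al (mxtens_unindex I).1 * be (mxtens_unindex I).2.

Lemma pmxE al be P i k j l :
  pmx (wfun al be) P (ix i k) (ix j l) = al i * be k * P (ix i k) (ix j l) * cj (al j * be l).
Proof. by rewrite mxE /wfun !mxtens_indexK. Qed.

Definition uv (u : C) (b : bool) (i : 'I_2) : C := if (i == i0) == b then u else 1.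

Lemma uv0 u b : uv u b i0 = if b then u else 1. Proof. by rewrite /uv eqxx; case: b. Qed.
Lemma uv1 u b : uv u b i1 = if b then 1 else u. Proof. by rewrite /uv; case: b. Qed.

Lemma uvK u b i : u * cj u = 1 -> uv u b i * cj (uv u b i) = 1.
Proof. by move=> h; rewrite /uv; case: ifP => _ //; rewrite rmorph1 mulr1. Qed.

Lemma pmx_diag u v P I : u * cj u = 1 -> v * cj v = 1 ->
  pmx (wfun (uv u true) (uv v false)) P I I = P I I.
Proof.
move=> hu hv; case: (mxtens_indexP I) => i k; rewrite pmxE rmorphM.
transitivity ((uv u true i * cj (uv u true i)) * (uv v false k * cj (uv v false k)) * P (ix i k) (ix i k)).
  by ring.
by rewrite !uvK // !mul1r.
Qed.

Lemma phase_dir p q m m' p' q' n n' (P : 'M[C]_(2*2)) :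
  Tm m' = Tm m -> Tm n' = Tm n -> coupling (mkr p q m) (mkr p' q' n) P ->
  exists P', coupling (mkr p q m') (mkr p' q' n') P' /\ cost P' = cost P.
Proof.
move=> hm hn [[hH hP htr] [hd hh]].
have [v [hv em]] := unimod hm.
have [u [hu en]] := unimod hn.
set al := uv u true; set be := uv v false.
set P' := pmx (wfun al be) P.
have dg I : P' I I = P I I by apply: pmx_diag.
have hal i : al i * cj (al i) = 1 by apply: uvK.
have hbe i : be i * cj (be i) = 1 by apply: uvK.
have pd i j : ptr_dual P' i j = al i * ptr_dual P i j * cj (al j).
  rewrite !ptrdE !pmxE !rmorphM.
  transitivity (al i * cj (al j) * ((be i0 * cj (be i0)) * P (ix i i0) (ix j i0)
     + (be i1 * cj (be i1)) * P (ix i i1) (ix j i1))); first by ring.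
  by rewrite !hbe !mul1r; ring.
have ph k l : ptr_H P' k l = be k * ptr_H P k l * cj (be l).
  rewrite !ptrHE !pmxE !rmorphM.
  transitivity (be k * cj (be l) * ((al i0 * cj (al i0)) * P (ix i0 k) (ix i0 l)
     + (al i1 * cj (al i1)) * P (ix i1 k) (ix i1 l))); first by ring.
  by rewrite !hal !mul1r; ring.
exists P'; split; last by rewrite !costE !dg.
split; [split|split].
- exact: herm_pmx.
- exact: psd_pmx.
- by rewrite tr4 !dg -tr4.
- apply/matrixP; apply: ord2P; apply: ord2P; rewrite pd hd;
  rewrite !mkrS;
  rewrite /al ?uv0 ?uv1 ?rmorph1 ?mulr1 ?mul1r //.
  + by rewrite mulrAC hu mul1r.
  + by rewrite en rmorphM mulrC.
- apply/matrixP; apply: ord2P; apply: ord2P; rewrite ph hh !trE;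
  rewrite !mkrS;
  rewrite /be ?uv0 ?uv1 ?rmorph1 ?mulr1 ?mul1r //.
  + by rewrite em rmorphM mulrC.
  + by rewrite mulrAC hv mul1r.
Qed.

Lemma Dz2_phase p q (m m' : C) p' q' (n n' : C) :
  Tm m' = Tm m -> Tm n' = Tm n ->
  Dz2 (mkr p q m') (mkr p' q' n') = Dz2 (mkr p q m) (mkr p' q' n).
Proof.
move=> hm hn; rewrite /Dz2; congr inf; apply/seteqP; split => y [P hP <-].
- by have [P' [hP' hc]] := phase_dir (esym hm) (esym hn) hP; exists P'.
- by have [P' [hP' hc]] := phase_dir hm hn hP; exists P'.
Qed.
End S6.

Section S7.
Variable R : realType.
Local Notation C := R[i].
Local Notation Re := complex.Re.
Local Notation Im := complex.Im.
Local Notation cj z := (conjc z).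

Definition fl (M : 'M[C]_2) : 'M[C]_2 := \matrix_(i, j) M (rev_ord i) (rev_ord j).
Definition Fl (P : 'M[C]_(2*2)) : 'M[C]_(2*2) := \matrix_(I, J) P (rev_ord I) (rev_ord J).

Lemma revi0 : rev_ord i0 = i1. Proof. exact: val_inj. Qed.
Lemma revi1 : rev_ord i1 = i0. Proof. exact: val_inj. Qed.
Lemma rev_ix i k : rev_ord (ix i k) = ix (rev_ord i) (rev_ord k).
Proof. by move: i k; apply: ord2P; apply: ord2P; apply: val_inj. Qed.

Lemma FlE P i k j l :
  Fl P (ix i k) (ix j l) = P (ix (rev_ord i) (rev_ord k)) (ix (rev_ord j) (rev_ord l)).
Proof. by rewrite mxE !rev_ix. Qed.

Lemma flE M i j : fl M i j = M (rev_ord i) (rev_ord j). Proof. by rewrite mxE. Qed.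

Lemma flK M : fl (fl M) = M.
Proof. by apply/matrixP => i j; rewrite !mxE !rev_ordK. Qed.
Lemma FlK P : Fl (Fl P) = P.
Proof. by apply/matrixP => i j; rewrite !mxE !rev_ordK. Qed.

Lemma fl_tr M : fl (M^T) = (fl M)^T.
Proof. by apply/matrixP => i j; rewrite !mxE. Qed.

Lemma cost_Fl P : cost (Fl P) = cost P.
Proof. by rewrite !costE !FlE revi0 revi1 addrC. Qed.

Lemma coup_fl r w P : coupling r w P -> coupling (fl r) (fl w) (Fl P).
Proof.
move=> [[hH hP htr] [hd hh]]; split; [split|split].
- by apply/matrixP => I J; rewrite !mxE (hermE hH (rev_ord J) (rev_ord I)).
- move=> v; have := hP (\col_I v (rev_ord I) 0).
  rewrite -!/(qf _ _) !qfE (reindex_inj rev_ord_inj) => H; apply: (le_trans H); apply/eqleC.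
  apply: eq_bigr => I _; rewrite (reindex_inj rev_ord_inj); apply: eq_bigr => J _.
  by rewrite !mxE !rev_ordK.
- by rewrite tr4 !FlE !revi0 !revi1 -htr tr4; ring.
- apply/matrixP => i j; rewrite -hd ptrdE !FlE !revi0 !revi1 flE ptrdE addrC.
  by [].
- apply/matrixP => k l; rewrite -fl_tr -hh ptrHE !FlE !revi0 !revi1 flE ptrHE addrC.
  by [].
Qed.

Lemma Dz2_fl r w : Dz2 (fl r) (fl w) = Dz2 r w.
Proof.
rewrite /Dz2; congr inf; apply/seteqP; split => y [P hP <-].
- exists (Fl P); first by rewrite -(flK r) -(flK w); apply: coup_fl.
  exact: cost_Fl.
- by exists (Fl P); [apply: coup_fl | apply: cost_Fl].
Qed.

Lemma fl_mkr p q (m : C) : fl (mkr p q m) = mkr q p (cj m).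
Proof.
apply/matrixP; apply: ord2P; apply: ord2P; rewrite flE ?revi0 ?revi1 !mkrS ?conjcK //.
Qed.
End S7.


Section S8.
Variable R : realType.
Local Notation C := R[i].
Local Notation Re := complex.Re.
Local Notation Im := complex.Im.
Local Notation cj z := (conjc z).

Lemma mul2E (A B : 'M[C]_2) i j : (A *m B) i j = A i i0 * B i0 j + A i i1 * B i1 j.
Proof. by rewrite mxE sum2. Qed.

Lemma bloch3 p q (m : C) : bloch (mkr p q m) third = p - q.
Proof.
rewrite /bloch /pauli /= tr2 !mul2E /sigma3 !mkrS.
case: (mx2E (1 : C) 0 0 (-1)) => -> -> -> ->.
by case: m => a b /=; ring.
Qed.

Lemma bloch_normE p q (m : C) :
  bloch_norm (mkr p q m) = Num.sqrt ((p - q) ^+ 2 + 4 * Tm m).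
Proof.
rewrite /bloch_norm !big_ord_recl big_ord0 /bloch /pauli /=.
rewrite !tr2 !mul2E !mkrS /sigma1 /sigma2 /sigma3.
case: (mx2E (1 : C) 0 0 (-1)) => -> -> -> ->.
case: (mx2E (0 : C) 1 1 0) => -> -> -> ->.
case: (mx2E (0 : C) (- Complex 0 1) (Complex 0 1) 0) => -> -> -> ->.
by congr Num.sqrt; rewrite /Tm; case: m => a b /=; ring.
Qed.
End S8.

Section S9.
Variable R : realType.
Local Notation C := R[i].
Local Notation Re := complex.Re.
Local Notation Im := complex.Im.
Local Notation cj z := (conjc z).

Lemma Tm_eq0 (m : C) : Tm m = 0 -> m = 0.
Proof.
rewrite /Tm; case: m => a b /= h.
have a0 : a = 0 by nra.
have b0 : b = 0 by nra.
by rewrite a0 b0.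
Qed.

Lemma Tm_ge0 (m : C) : 0 <= Tm m.
Proof. by rewrite /Tm addr_ge0 // sqr_ge0. Qed.

Lemma Tm_cj (m : C) : Tm (cj m) = Tm m.
Proof. by rewrite /Tm; case: m => a b /=; rewrite sqrrN. Qed.

Lemma Dz2_of_Dz (a b c d : 'M[C]_2) : Dz a b = Dz c d -> Dz2 a b = Dz2 c d.
Proof.
move=> h; have := congr1 (fun x => x ^+ 2) h; rewrite /Dz /=.
by rewrite !sqr_sqrtr ?Dz2_ge0.
Qed.

Lemma De0 a b (m : C) : density (mkr a b m) -> 0 <= a -> 0 <= b -> a + b = 1 ->
  Dz2 (mkr a b m) (mkr 1 0 0) = 4 * b.
Proof.
move=> hd a0 b0 ab; have /andP[h1 h2] := Dz2_diag hd ler01 (lexx 0) (addr0 1).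
have e : `|a - 1| = b by rewrite (_ : a - 1 = - b) ?normrN ?ger0_norm //; lra.
rewrite e in h1; apply/le_anti/andP; split => //; lra.
Qed.

Lemma De1 a b (m : C) : density (mkr a b m) -> 0 <= a -> 0 <= b -> a + b = 1 ->
  Dz2 (mkr a b m) (mkr 0 1 0) = 4 * a.
Proof.
move=> hd a0 b0 ab; have /andP[h1 h2] := Dz2_diag hd (lexx 0) ler01 (add0r 1).
rewrite subr0 ger0_norm // in h1; apply/le_anti/andP; split => //; lra.
Qed.

Lemma SD0 : SD 1 0 (0 : C) = 0.
Proof. by rewrite /SD /Tm /= expr0n /= addr0 mul0r mulr0. Qed.
End S9.

Lemma SDm0 (R : realType) p q : SD p q (0 : R[i]) = 0.
Proof. by rewrite /SD /Tm /= expr0n /= addr0 mul0r mulr0. Qed.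

Lemma Tm0 (R : realType) : Tm (0 : R[i]) = 0.
Proof. by rewrite /Tm /= expr0n /= addr0. Qed.

Local Close Scope classical_set_scope.

Theorem theorem3p1 (R : realType) (Phi : 'M[R[i]]_2 -> 'M[R[i]]_2)
  (HPhi : forall rho : 'M[R[i]]_2, density rho -> density (Phi rho)) :
  (forall rho omega : 'M[R[i]]_2, density rho -> density omega ->
     Dz (Phi rho) (Phi omega) = Dz rho omega)
  <->
  ((forall rho : 'M[R[i]]_2, density rho -> bloch_norm (Phi rho) = bloch_norm rho) /\
   ((forall rho : 'M[R[i]]_2, density rho ->
       bloch (Phi rho) third = bloch rho third) \/
    (forall rho : 'M[R[i]]_2, density rho ->
       bloch (Phi rho) third = - bloch rho third))).
Proof.
have d0 : density (mkr 1 0 (0 : R[i])) := dens_mkr0 ler01 (lexx 0) (addr0 1).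
have d1 : density (mkr 0 1 (0 : R[i])) := dens_mkr0 (lexx 0) ler01 (add0r 1).
have T00 p q : Tm (0 : R[i]) <= p * q -> True by [].
split.
- move=> H.
  have H2 r w : density r -> density w -> Dz2 (Phi r) (Phi w) = Dz2 r w.
    by move=> ? ?; apply: Dz2_of_Dz; apply: H.
  have [p [q [m [eP p0 q0 pq Tpq]]]] := dens_form (HPhi _ d0).
  have [p' [q' [m' [eQ p0' q0' pq' Tpq']]]] := dens_form (HPhi _ d1).
  have e00 : Dz2 (mkr 1 0 (0 : R[i])) (mkr 1 0 0) = 0.
    by rewrite Dz2_self ?SDm0 ?Tm0 ?mulr0 //; lra.
  have e11 : Dz2 (mkr 0 1 (0 : R[i])) (mkr 0 1 0) = 0.
    by rewrite Dz2_self ?SDm0 ?Tm0 ?mul0r //; lra.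
  have m0 : m = 0.
    have := H2 _ _ d0 d0; rewrite e00 eP Dz2_self //.
    by move/(SD_eq0 Tpq)/Tm_eq0.
  have m0' : m' = 0.
    have := H2 _ _ d1 d1; rewrite e11 eQ Dz2_self //.
    by move/(SD_eq0 Tpq')/Tm_eq0.
  rewrite {}m0 in eP Tpq; rewrite {}m0' in eQ Tpq'.
  have e01 : Dz2 (mkr 1 0 (0 : R[i])) (mkr 0 1 0) = 4.
    by rewrite De1 ?mulr1 //; lra.
  have hPQ := H2 _ _ d0 d1; rewrite e01 eP eQ in hPQ.
  have dP : density (mkr p q (0 : R[i])) by rewrite -eP; apply: HPhi.
  have /andP[_ hle] := Dz2_diag dP p0' q0' pq'.
  rewrite hPQ in hle.
  have hcase : (p = 1 /\ q = 0) \/ (p = 0 /\ q = 1).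
    have [p00|pn0] := eqVneq p 0; first by right; split => //; lra.
    left.
    have pp : 0 < p by rewrite lt_def pn0.
    have e1 : p * p' + q * q' <= 0 by nra.
    have pp' : p * p' = 0 by nra.
    have p'0 : p' = 0.
      by move/eqP: pp'; rewrite mulf_eq0 (negbTE pn0) /= => /eqP.
    have qq' : q * q' = 0 by nra.
    have q'1 : q' = 1 by lra.
    have q0'' : q = 0 by move: qq'; rewrite q'1 mulr1.
    split => //; lra.
  have key r : density r -> exists a b (mm : R[i]) a' b' (mm' : R[i]),
      [/\ r = mkr a b mm, Phi r = mkr a' b' mm', a + b = 1 /\ a' + b' = 1,
          Tm mm' = Tm mm & (p = 1 /\ a' = a \/ p = 0 /\ a' = b)].
    move=> hr.
    have [a [b [mm [er a0 b0 ab Tab]]]] := dens_form hr.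
    have [a' [b' [mm' [er' a0' b0' ab' Tab']]]] := dens_form (HPhi _ hr).
    have hD := H2 _ _ hr d0.
    rewrite er' [in RHS]er (De0 _ a0 b0 ab) in hD; last by rewrite -er.
    have hr' : density (mkr a' b' mm') by rewrite -er'; apply: HPhi.
    have hS := H2 _ _ hr hr.
    rewrite er' er !Dz2_self // in hS.
    have hab : a' * b' = a * b /\ (p = 1 /\ a' = a \/ p = 0 /\ a' = b).
      case: hcase => -[pv qv]; rewrite eP pv qv in hD.
      + rewrite (De0 _ a0' b0' ab') // in hD.
        have bb : b' = b by lra.
        split; last by left; split => //; lra.
        by rewrite bb (_ : a' = a) //; lra.
      + rewrite (De1 _ a0' b0' ab') // in hD.
        have aa : a' = b by lra.
        split; last by right.
        by rewrite aa (_ : b' = a) 1?mulrC //; lra.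
    case: hab => hab hc.
    exists a, b, mm, a', b', mm'; split => //.
    apply: esym; apply: (SD_inj hab (Tm_ge0 _) Tab (Tm_ge0 _) Tab').
    by rewrite hS.
  split.
  + move=> r hr; have [a [b [mm [a' [b' [mm' [er er' [ab ab'] hT hc]]]]]]] := key r hr.
    rewrite er' er !bloch_normE hT; congr Num.sqrt; congr (_ + _).
    case: hc => -[_ ha].
    * have hb : b' = b by lra.
      by rewrite ha hb.
    * have hb : b' = a by lra.
      by rewrite ha hb; ring.
  + case: hcase => -[pv qv]; [left|right] => r hr;
    have [a [b [mm [a' [b' [mm' [er er' [ab ab'] hT hc]]]]]]] := key r hr;
    rewrite er' er !bloch3; case: hc => -[hp ha]; lra.
- case=> Hn H3 r w hr hw.
  have [a [b [mm [er a0 b0 ab Tab]]]] := dens_form hr.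
  have [a' [b' [mm' [er' a0' b0' ab' Tab']]]] := dens_form (HPhi _ hr).
  have [c [d [nn [ew c0 d0' cd Tcd]]]] := dens_form hw.
  have [c' [d' [nn' [ew' c0' d0'' cd' Tcd']]]] := dens_form (HPhi _ hw).
  have nr := Hn _ hr; have nw := Hn _ hw.
  rewrite er' er !bloch_normE in nr; rewrite ew' ew !bloch_normE in nw.
  have sq (x y : R) : 0 <= x -> 0 <= y -> Num.sqrt x = Num.sqrt y -> x = y.
    by move=> x0 y0 h; have := congr1 (fun z => z ^+ 2) h; rewrite /= !sqr_sqrtr.
  have P1 (z : R) (u : R[i]) : 0 <= z ^+ 2 + 4 * Tm u.
    by apply: addr_ge0; [apply: sqr_ge0 | apply: mulr_ge0; [lra | apply: Tm_ge0]].
  move: (sq _ _ (P1 _ _) (P1 _ _) nr) (sq _ _ (P1 _ _) (P1 _ _) nw) => {}nr {}nw.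
  rewrite /Dz; congr Num.sqrt; rewrite er' ew' er ew.
  case: H3 => H3.
  + have t1 := H3 _ hr; have t2 := H3 _ hw.
    rewrite er' er !bloch3 in t1; rewrite ew' ew !bloch3 in t2.
    have -> : a' = a by lra. have -> : b' = b by lra.
    have -> : c' = c by lra. have -> : d' = d by lra.
    apply: Dz2_phase.
    * have : (a' - b') ^+ 2 = (a - b) ^+ 2 by rewrite t1.
      lra.
    * have : (c' - d') ^+ 2 = (c - d) ^+ 2 by rewrite t2.
      lra.
  + have t1 := H3 _ hr; have t2 := H3 _ hw.
    rewrite er' er !bloch3 in t1; rewrite ew' ew !bloch3 in t2.
    have -> : a' = b by lra. have -> : b' = a by lra.
    have -> : c' = d by lra. have -> : d' = c by lra.
    rewrite -[RHS]Dz2_fl !fl_mkr; apply: Dz2_phase; rewrite Tm_cj.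
    * have : (a' - b') ^+ 2 = (a - b) ^+ 2 by rewrite t1 sqrrN.
      lra.
    * have : (c' - d') ^+ 2 = (c - d) ^+ 2 by rewrite t2 sqrrN.
      lra.
Qed.
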